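(* Let $f:\mathbb{R}^d\times\mathcal{X}\to\mathbb{R}$ be differentiable in $\theta$, where $\mathcal{X}$ is a subset of a Euclidean space with $\sup_{x\in\mathcal{X}}\Vert x\Vert\le D<\infty$. Assume (A1): there are $K_1,K_2>0$ with $\Vert\nabla f(\theta,x)-\nabla f(\hat\theta,\hat x)\Vert\le K_1\Vert\theta-\hat\theta\Vert+K_2\Vert x-\hat x\Vert(\Vert\theta\Vert+\Vert\hat\theta\Vert+1)$ for all $\theta,\hat\theta\in\mathbb{R}^d$, $x,\hat x\in\mathcal{X}$; and (A2): there is $\mu>0$ with $\langle\nabla f(\theta_1,x)-\nabla f(\theta_2,x),\theta_1-\theta_2\rangle\ge\mu\Vert\theta_1-\theta_2\Vert^2$ for all $\theta_1,\theta_2,x$. Let $\hat x_1,\dots,\hat x_n\in\mathcal{X}$, $b\in\{1,\dots,n\}$, let $\hat\theta_*$ be the minimizer of $\hat F(\theta,\hat X_n):=\frac1n\sum_{i=1}^nf(\theta,\hat x_i)$, and let $\hat V(\theta):=1+\Vert\theta-\hat\theta_*\Vert^2$. Let $\hat P$ be the transition kernel of $\hat\theta_k=\hat\theta_{k-1}-\frac{\eta}{b}\sum_{i\in\Omega_k}\nabla f(\hat\theta_{k-1},\hat x_i)$, with $(\Omega_k)$ i.i.d. uniformly random $b$-subsets of $\{1,\dots,n\}$. If $\eta<\min\left\{\frac1\mu,\frac{\mu}{K_1^2+64D^2K_2^2}\right\}$, then for all $\theta\in\mathbb{R}^d$, $$(\hat P\hat V)(\theta)\le(1-\eta\mu)\hat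 V(\theta)+2\eta\mu-\eta^2K_1^2-56\eta^2D^2K_2^2+64\eta^2D^2K_2^2\Vert\hat\theta_*\Vert^2.$$
   Context: $(\hat P\hat V)(\theta)=\mathbb{E}[\hat V(\hat\theta_1)\mid\hat\theta_0=\theta]$. *)

(* Defs.v *)
From HB Require Import structures.
From mathcomp Require Import all_boot all_order all_algebra.
From mathcomp Require Import all_classical all_reals all_analysis.
Set Implicit Arguments. Unset Strict Implicit. Unset Printing Implicit Defensive.
Import Order.TTheory GRing.Theory Num.Theory.
Import numFieldNormedType.Exports.
Local Open Scope ring_scope.

Definition dotv (R : realType) (d : nat) (u v : 'rV[R]_d) : R :=
  \sum_(i < d) u 0 i * v 0 i.

Definition enorm (R : realType) (d : nat) (u : 'rV[R]_d) : R :=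
  Num.sqrt (dotv u u).

Definition Fhat (R : realType) (d m n : nat) (f : 'rV[R]_d -> 'rV[R]_m -> R)
  (xs : 'I_n -> 'rV[R]_m) (theta : 'rV[R]_d) : R :=
  n%:R^-1 * \sum_(i < n) f theta (xs i).

Definition Vhat (R : realType) (d : nat) (thstar theta : 'rV[R]_d) : R :=
  1 + enorm (theta - thstar) ^+ 2.

(* (P V)(theta) = E[ V(theta - eta/b sum_{i in Omega} grad f(theta, x_i)) ],
   Omega uniformly distributed over the b-subsets of {1,..,n}
   (here indexed by 'I_n); the expectation is the uniform average. *)
Definition PV (R : realType) (d m n b : nat)
  (gradf : 'rV[R]_d -> 'rV[R]_m -> 'rV[R]_d) (xs : 'I_n -> 'rV[R]_m)
  (eta : R) (V : 'rV[R]_d -> R) (theta : 'rV[R]_d) : R :=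
  (\sum_(S : {set 'I_n} | #|S| == b)
      V (theta - (eta / b%:R) *: \sum_(i in S) gradf theta (xs i)))
  / #|[set S : {set 'I_n} | #|S| == b]|%:R.

(* Main.v *)
Require Import Defs.
From HB Require Import structures.
From mathcomp Require Import all_boot all_order all_algebra.
From mathcomp Require Import all_classical all_reals all_analysis.
From mathcomp Require Import all_fingroup.
From mathcomp Require Import ring lra.
Import Order.TTheory GRing.Theory Num.Theory.
Import numFieldNormedType.Exports.
Local Open Scope ring_scope.

Section Dot.
Variables (R : realType) (d : nat).
Implicit Types u v w : 'rV[R]_d.

Lemma dotvC u v : dotv u v = dotv v u.
Proof. by apply: eq_bigr => i _; rewrite mulrC. Qed.

Lemma dotvDl u w v : dotv (u + w) v = dotv u v + dotv w v.
Proof. by rewrite /dotv -big_split; apply: eq_bigr => i _; rewrite mxE mulrDl. Qed.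

Lemma dotvZl a u v : dotv (a *: u) v = a * dotv u v.
Proof. by rewrite /dotv mulr_sumr; apply: eq_bigr => i _; rewrite mxE mulrA. Qed.

Lemma dotv0l v : dotv 0 v = 0.
Proof. by rewrite /dotv big1 // => i _; rewrite mxE mul0r. Qed.

Lemma dotvNl u v : dotv (- u) v = - dotv u v.
Proof. by rewrite -scaleN1r dotvZl mulN1r. Qed.

Lemma dotvBl u w v : dotv (u - w) v = dotv u v - dotv w v.
Proof. by rewrite dotvDl dotvNl. Qed.

Lemma dotvDr u w v : dotv v (u + w) = dotv v u + dotv v w.
Proof. by rewrite dotvC dotvDl !(dotvC v). Qed.

Lemma dotvZr a u v : dotv v (a *: u) = a * dotv v u.
Proof. by rewrite dotvC dotvZl dotvC. Qed.

Lemma dotvBr u w v : dotv v (u - w) = dotv v u - dotv v w.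
Proof. by rewrite dotvC dotvBl !(dotvC v). Qed.

Lemma dotv_suml (I : finType) (P : pred I) (F : I -> 'rV[R]_d) v :
  dotv (\sum_(i | P i) F i) v = \sum_(i | P i) dotv (F i) v.
Proof. exact: (big_morph (fun u => dotv u v) (fun u w => dotvDl u w v) (dotv0l v)). Qed.

Lemma dotvv_ge0 u : 0 <= dotv u u.
Proof. by apply: sumr_ge0 => i _; rewrite -expr2 sqr_ge0. Qed.

Lemma dotvv_eq0 u : dotv u u = 0 -> u = 0.
Proof.
move=> /eqP; rewrite psumr_eq0 => [/allP H|i _]; last by rewrite -expr2 sqr_ge0.
apply/rowP => i; rewrite mxE; apply/eqP.
by have := H i (mem_index_enum _); rewrite /= -expr2 sqrf_eq0.
Qed.

Lemma enorm_ge0 u : 0 <= enorm u.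
Proof. exact: sqrtr_ge0. Qed.

Lemma enorm_sq u : enorm u ^+ 2 = dotv u u.
Proof. by rewrite /enorm sqr_sqrtr // dotvv_ge0. Qed.

Lemma CS u v : dotv u v ^+ 2 <= dotv u u * dotv v v.
Proof.
have [v0|vn0] := eqVneq (dotv v v) 0.
  by move/dotvv_eq0: v0 => ->; rewrite dotvC !dotv0l expr0n /= mulr0.
have vp : 0 < dotv v v by rewrite lt_def vn0 dotvv_ge0.
set t := dotv u v / dotv v v.
have := dotvv_ge0 (u - t *: v).
rewrite !dotvBl !dotvBr !dotvZl !dotvZr (dotvC v u) => H.
have -> : dotv u u * dotv v v = (dotv u u - (t * dotv u v - t * (t * dotv v v)) - t * dotv u v) * dotv v v + dotv u v ^+ 2.
  rewrite /t; field; exact: vn0.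
by rewrite -subr_ge0 addrK; apply: mulr_ge0; [lra | exact: ltW].
Qed.

Lemma dotv_le u v : dotv u v <= enorm u * enorm v.
Proof.
rewrite /enorm -sqrtrM ?dotvv_ge0 //.
apply: (le_trans (ler_norm _)).
by rewrite -(sqrtr_sqr (dotv u v)) ler_sqrt ?CS // mulr_ge0 // dotvv_ge0.
Qed.

Lemma enormD u v : enorm (u + v) <= enorm u + enorm v.
Proof.
rewrite -(ler_pXn2r (n:=2)) // ?nnegrE ?addr_ge0 ?enorm_ge0 //.
rewrite enorm_sq dotvDl !dotvDr (dotvC v u) -!enorm_sq.
have := dotv_le u v; nra.
Qed.

Lemma enormZ a u : enorm (a *: u) = `|a| * enorm u.
Proof. by rewrite /enorm dotvZl dotvZr mulrA -expr2 sqrtrM ?sqr_ge0 // sqrtr_sqr. Qed.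

Lemma enormN u : enorm (- u) = enorm u.
Proof. by rewrite -scaleN1r enormZ normrN1 mul1r. Qed.

Lemma enorm_sum (I : finType) (P : pred I) (F : I -> 'rV[R]_d) :
  enorm (\sum_(i | P i) F i) <= \sum_(i | P i) enorm (F i).
Proof.
elim/big_rec2: _ => [|i y1 y2 _ Hy].
  by rewrite /enorm dotv0l sqrtr0.
exact: le_trans (enormD _ _) (lerD (lexx _) Hy).
Qed.

Lemma dotv_expand u v (e : R) :
  dotv (u - e *: v) (u - e *: v) = dotv u u - 2 * e * dotv u v + e ^+ 2 * dotv v v.
Proof. rewrite !dotvBl !dotvBr !dotvZl !dotvZr (dotvC v u); ring. Qed.

End Dot.
Arguments dotv_expand {R d}.
Arguments dotvC {R d}.
Arguments dotvDl {R d}.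
Arguments dotvZl {R d}.
Arguments dotv0l {R d}.
Arguments dotvNl {R d}.
Arguments dotvBl {R d}.
Arguments dotvDr {R d}.
Arguments dotvZr {R d}.
Arguments dotvBr {R d}.
Arguments dotv_suml {R d}.
Arguments dotvv_ge0 {R d}.
Arguments dotvv_eq0 {R d}.
Arguments enorm_ge0 {R d}.
Arguments enorm_sq {R d}.
Arguments CS {R d}.
Arguments dotv_le {R d}.
Arguments enormD {R d}.
Arguments enormZ {R d}.
Arguments enormN {R d}.
Arguments enorm_sum {R d}.
Lemma fermat_dir (R : realType) (V : normedModType R) (F : V -> R) (a v : V) :
  derivable F a v -> (forall y, F a <= F y) -> 'D_v F a = 0.
Proof.
move=> dF amin.
apply/eqP; rewrite eq_le; apply/andP; split.
  rewrite /derive (cvg_at_leftE (fun h : R => h^-1 *: ((F \o shift a) (h *: v) - F a))) //.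
  apply: limr_le.
    rewrite -(cvg_at_leftE (fun h : R => h^-1 *: ((F \o shift a) (h *: v) - F a))) //.
    apply: cvg_trans dF; apply: cvg_app.
    move=> A [e egt0 Ae]; exists e => // x xe xgt0; apply: Ae => //.
    exact/ltr0_neq0.
  near=> h; apply: mulr_le0_ge0.
    by rewrite invr_le0; apply: ltW; near: h; exists 1 => /=.
  by rewrite subr_ge0 /=; apply: amin.
rewrite /derive (cvg_at_rightE (fun h : R => h^-1 *: ((F \o shift a) (h *: v) - F a))) //.
apply: limr_ge.
  rewrite -(cvg_at_rightE (fun h : R => h^-1 *: ((F \o shift a) (h *: v) - F a))) //.
  apply: cvg_trans dF; apply: cvg_app.
  move=> A [e egt0 Ae]; exists e => // x xe xgt0; apply: Ae => //.
  exact/lt0r_neq0.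
near=> h; apply: mulr_ge0.
  by rewrite invr_ge0; apply: ltW; near: h; exists 1 => /=.
by rewrite subr_ge0 /=; apply: amin.
Unshelve. all: by end_near. Qed.

Section Comb.
Local Open Scope nat_scope.
Lemma comb_count (n b : nat) (i : 'I_n) :
  n * #|[set S : {set 'I_n} | (#|S| == b) && (i \in S)]| =
  b * #|[set S : {set 'I_n} | #|S| == b]|.
Proof.
pose c := fun j : 'I_n => #|[set S : {set 'I_n} | (#|S| == b) && (j \in S)]|.
have sym : forall j k, c j <= c k.
  move=> j k; rewrite /c -(card_imset _ (imset_inj (@perm_inj _ (tperm j k)))).
  apply: subset_leq_card; apply/fintype.subsetP => _ /imsetP [S HS ->].
  rewrite inE in HS; case/andP: HS => /eqP HS jS.
  rewrite inE card_imset ?HS ?eqxx /=; last exact: perm_inj.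
  by rewrite -{1}(tpermL j k); apply: imset_f.
have ceq : forall j, c j = c i by move=> j; apply/eqP; rewrite eqn_leq !sym.
have E1 : \sum_(j < n) c j = n * c i.
  by rewrite (eq_bigr (fun=> c i)) ?sum_nat_const ?card_ord // => j _; rewrite ceq.
rewrite -/(c i) -E1.
have E2 : forall j, c j = \sum_(S : {set 'I_n} | #|S| == b) (j \in S : nat).
  move=> j; rewrite /c -sum1dep_card big_mkcondr /=.
  by apply: eq_bigr => S _; case: (j \in S).
transitivity (\sum_(j < n) \sum_(S : {set 'I_n} | #|S| == b) (j \in S : nat)).
  by apply: eq_bigr => j _; exact: E2.
rewrite exchange_big /=.
rewrite (eq_bigr (fun=> b)); last first.
  move=> S /eqP <-; rewrite -sum1_card [RHS]big_mkcond /=.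
  by apply: eq_bigr => j _; case: (j \in S).
by rewrite -sum1dep_card big_distrr /= muln1.
Qed.

Lemma comb_sum (n b : nat) (i : 'I_n) :
  n * \sum_(S : {set 'I_n} | #|S| == b) (i \in S : nat) =
  b * #|[set S : {set 'I_n} | #|S| == b]|.
Proof.
by rewrite -(@comb_count n b i) -sum1dep_card big_mkcondr.
Qed.

End Comb.

Lemma comb_vec (R : realType) (d n b : nat) (v : 'I_n -> 'rV[R]_d) : (0 < n)%N ->
  \sum_(S : {set 'I_n} | #|S| == b) \sum_(i in S) v i =
  ((b * #|[set S : {set 'I_n} | #|S| == b]|)%:R / n%:R) *: \sum_(i < n) v i.
Proof.
move=> n0.
transitivity (\sum_(S : {set 'I_n} | #|S| == b) \sum_(i < n) (i \in S)%:R *: v i).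
  apply: eq_bigr => S _; rewrite big_mkcond /=; apply: eq_bigr => i _.
  by case: (i \in S); rewrite ?scale1r ?scale0r.
rewrite exchange_big /= scaler_sumr; apply: eq_bigr => i _.
rewrite -scaler_suml; congr (_ *: _).
rewrite -(@comb_sum n b i) natrM mulrC mulKf ?pnatr_eq0 -?lt0n // natr_sum.
by apply: eq_bigr => S _; case: (i \in S).
Qed.

Lemma avg_le (R : realType) d (I : finType) (A : {pred I}) (F : I -> 'rV[R]_d) M :
  (0 < #|A|)%N -> (forall i, i \in A -> enorm (F i) <= M) ->
  enorm (#|A|%:R^-1 *: \sum_(i in A) F i) <= M.
Proof.
move=> A0 H; rewrite enormZ ger0_norm ?invr_ge0 // mulrC ler_pdivrMr ?ltr0n //.
apply: le_trans; first exact: enorm_sum.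
by rewrite (le_trans (ler_sum _ H)) // sumr_const mulr_natr.
Qed.

Lemma avg_leT (R : realType) d (I : finType) (F : I -> 'rV[R]_d) M :
  (0 < #|I|)%N -> (forall i, enorm (F i) <= M) ->
  enorm (#|I|%:R^-1 *: \sum_i F i) <= M.
Proof.
move=> A0 H; rewrite enormZ ger0_norm ?invr_ge0 // mulrC ler_pdivrMr ?ltr0n //.
apply: le_trans; first exact: enorm_sum.
by rewrite (le_trans (ler_sum _ (fun i _ => H i))) // sumr_const mulr_natr.
Qed.

Lemma grad0 (R : realType) (d m n : nat) (X : set 'rV[R]_m)
  (f : 'rV[R]_d -> 'rV[R]_m -> R) (gradf : 'rV[R]_d -> 'rV[R]_m -> 'rV[R]_d)
  (xs : 'I_n -> 'rV[R]_m) (thstar : 'rV[R]_d) :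
  (forall x theta, X x -> differentiable (fun t => f t x) theta) ->
  (forall x theta v, X x -> 'D_v (fun t => f t x) theta = dotv (gradf theta x) v) ->
  (forall i, X (xs i)) -> (0 < n)%N ->
  (forall theta, Fhat f xs thstar <= Fhat f xs theta) ->
  \sum_(i < n) gradf thstar (xs i) = 0.
Proof.
move=> Hd HD Hx n0 Hmin.
set v := \sum_(i < n) gradf thstar (xs i).
have dF : forall i : 'I_n, derivable (fun t => f t (xs i)) thstar v.
  by move=> i; apply: diff_derivable; apply: Hd.
have H : 'D_v (\sum_(i < n) (fun t => f t (xs i))) thstar = 0.
  apply: fermat_dir; first exact: derivable_sum.
  move=> y; rewrite !fct_sumE /=; have := Hmin y.
  by rewrite /Fhat ler_pM2l // invr_gt0 ltr0n.
rewrite derive_sum // in H.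
apply: dotvv_eq0; rewrite {1}/v dotv_suml -[RHS]H; apply: eq_bigr => i _.
by rewrite HD.
Qed.

Lemma enorm0 (R : realType) d : enorm (0 : 'rV[R]_d) = 0.
Proof. by rewrite /enorm dotv0l sqrtr0. Qed.

Lemma Npos n b : (0 < b <= n)%N -> (0 < #|[set S : {set 'I_n} | #|S| == b]|)%N.
Proof. move=> Hb. by rewrite card_draws card_ord bin_gt0; case/andP: Hb. Qed.

Local Open Scope classical_set_scope.

Theorem lemmaC2 (R : realType) (d m : nat)
  (X : set 'rV[R]_m) (D : R)
  (f : 'rV[R]_d -> 'rV[R]_m -> R) (gradf : 'rV[R]_d -> 'rV[R]_m -> 'rV[R]_d)
  (K1 K2 mu : R) (n b : nat) (xs : 'I_n -> 'rV[R]_m)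
  (thstar : 'rV[R]_d) (eta : R) :
  (forall x, X x -> enorm x <= D) ->
  (* f differentiable in theta, with gradient gradf *)
  (forall x theta, X x -> differentiable (fun t => f t x) theta) ->
  (forall x theta v, X x -> 'D_v (fun t => f t x) theta = dotv (gradf theta x) v) ->
  (* (A1) *)
  0 < K1 -> 0 < K2 ->
  (forall th th' x x', X x -> X x' ->
     enorm (gradf th x - gradf th' x') <=
       K1 * enorm (th - th') + K2 * enorm (x - x') * (enorm th + enorm th' + 1)) ->
  (* (A2) *)
  0 < mu ->
  (forall th1 th2 x, X x ->
     dotv (gradf th1 x - gradf th2 x) (th1 - th2) >= mu * enorm (th1 - th2) ^+ 2) ->
  (* data, batch size, minimizer *)
  (forall i, X (xs i)) ->
  (0 < b <= n)%N ->
  (forall theta, Fhat f xs thstar <= Fhat f xs theta) ->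
  (* step size *)
  0 < eta -> eta < Num.min (mu^-1) (mu / (K1 ^+ 2 + 64 * D ^+ 2 * K2 ^+ 2)) ->
  forall theta : 'rV[R]_d,
    @PV R d m n b gradf xs eta (Vhat thstar) theta <=
      (1 - eta * mu) * Vhat thstar theta + 2 * eta * mu - eta ^+ 2 * K1 ^+ 2
      - 56 * eta ^+ 2 * D ^+ 2 * K2 ^+ 2
      + 64 * eta ^+ 2 * D ^+ 2 * K2 ^+ 2 * enorm thstar ^+ 2.
Proof.
move=> HD Hdiff HD' K1p K2p HA1 mup HA2 Hx Hb Hmin etap Heta theta.
have n0 : (0 < n)%N by case/andP: Hb => b0 bn; exact: leq_trans b0 bn.
have b0 : (0 < b)%N by case/andP: Hb.
pose i0 : 'I_n := Ordinal n0.
have D0 : 0 <= D := le_trans (enorm_ge0 _) (HD _ (Hx i0)).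
have g0 := @grad0 R d m n X f gradf xs thstar Hdiff HD' Hx n0 Hmin.
have hM : eta * (K1 ^+ 2 + 64 * D ^+ 2 * K2 ^+ 2) < mu.
  have Mp : 0 < K1 ^+ 2 + 64 * D ^+ 2 * K2 ^+ 2.
    have h1 : 0 < K1 ^+ 2 by rewrite exprn_gt0.
    have h2 : 0 <= D ^+ 2 * K2 ^+ 2 by rewrite mulr_ge0 ?sqr_ge0.
    lra.
  move: Heta; rewrite lt_min => /andP [_]; rewrite ltr_pdivlMr //.
set N := #|[set S : {set 'I_n} | #|S| == b]%SET|.
have N0 : (0 < N)%N by apply: Npos.
set G := fun i => gradf theta (xs i).
set u := theta - thstar.
set s := enorm u. set t := enorm thstar.
have s0 : 0 <= s := enorm_ge0 _.
have t0 : 0 <= t := enorm_ge0 _.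
set gb := n%:R^-1 *: \sum_(i < n) G i.
set a := u - eta *: gb.
set rho := 2 * D * K2 * (2 * (s + t) + 1).
set r := fun S : {set 'I_n} => b%:R^-1 *: \sum_(i in S) G i - gb.
have F1 : forall i j, enorm (G i - G j) <= rho.
  move=> i j; have := HA1 theta theta (xs i) (xs j) (Hx i) (Hx j).
  rewrite subrr enorm0 mulr0 add0r => h; apply: le_trans h _.
  have he : enorm (xs i - xs j) <= 2 * D.
    apply: le_trans (enormD _ _) _; rewrite enormN.
    by have := HD _ (Hx i); have := HD _ (Hx j); lra.
  have hT : enorm theta <= s + t.
    by rewrite -(subrK thstar theta); exact: enormD.
  have e0 := enorm_ge0 (xs i - xs j).
  have T0 := enorm_ge0 theta.
  have h1 : 0 <= (2 * D - enorm (xs i - xs j)) * (2 * enorm theta + 1).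
    by apply: mulr_ge0; lra.
  have h2 : 0 <= 2 * D * (2 * (s + t) - 2 * enorm theta).
    by apply: mulr_ge0; lra.
  have h3 : 0 <= K2 * ((2 * D - enorm (xs i - xs j)) * (2 * enorm theta + 1) + 2 * D * (2 * (s + t) - 2 * enorm theta)).
    by apply: mulr_ge0; lra.
  rewrite /rho; nra.
have F2 : forall i, enorm (G i - gb) <= rho.
  move=> i.
  have -> : G i - gb = #|'I_n|%:R^-1 *: \sum_(j < n) (G i - G j).
    rewrite card_ord sumrB sumr_const card_ord scalerBr -[G i *+ n]scaler_nat scalerA mulVf ?scale1r //.
    by rewrite pnatr_eq0 -lt0n.
  by apply: avg_leT; rewrite ?card_ord.
have F3 : forall S : {set 'I_n}, #|S| == b -> enorm (r S) <= rho.
  move=> S /eqP Sb.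
  have -> : r S = #|S|%:R^-1 *: \sum_(i in S) (G i - gb).
    rewrite Sb sumrB sumr_const Sb scalerBr -[gb *+ b]scaler_nat scalerA mulVf ?scale1r //.
    by rewrite pnatr_eq0 -lt0n.
  by apply: avg_le; rewrite ?Sb // => i _; apply: F2.
have sG : \sum_(i < n) G i = \sum_(i < n) (G i - gradf thstar (xs i)).
  by rewrite sumrB g0 subr0.
have F4 : \sum_(S : {set 'I_n} | #|S| == b) r S = 0.
  rewrite sumrB -scaler_sumr comb_vec // -/N.
  have -> : \sum_(S : {set 'I_n} | #|S| == b) gb = N%:R *: gb.
    rewrite /N -sum1dep_card natr_sum scaler_suml; apply: eq_bigr => S _.
    by rewrite scale1r.
  rewrite /gb !scalerA natrM; apply/eqP; rewrite subr_eq0; apply/eqP; congr (_ *: _).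
  by field; rewrite !pnatr_eq0 -!lt0n n0 b0.
have F5 : mu * s ^+ 2 <= dotv gb u.
  rewrite /gb sG dotvZl dotv_suml.
  rewrite ler_pdivlMl ?ltr0n //.
  have := @ler_sum _ 'I_n (index_enum _) xpredT (fun=> mu * s ^+ 2) (fun i => dotv (G i - gradf thstar (xs i)) u) (fun i _ => HA2 theta thstar (xs i) (Hx i)).
  by rewrite sumr_const card_ord mulr_natl.
have F6 : enorm gb <= K1 * s.
  rewrite /gb sG -{1}(card_ord n); apply: avg_leT; rewrite ?card_ord // => i.
  have := HA1 theta thstar (xs i) (xs i) (Hx i) (Hx i).
  by rewrite subrr enorm0 mulr0 mul0r addr0.
set C0 := 1 + dotv a a + eta ^+ 2 * rho ^+ 2.
have key : forall S : {set 'I_n}, #|S| == b ->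
    Vhat thstar (theta - (eta / b%:R) *: \sum_(i in S) G i) <= C0 - 2 * eta * dotv a (r S).
  move=> S HS; rewrite /Vhat.
  have -> : theta - (eta / b%:R) *: \sum_(i in S) G i - thstar = a - eta *: r S.
    by rewrite /a /r /u scalerBr opprB addrA subrK scalerA addrAC.
  rewrite enorm_sq dotv_expand.
  have hr : dotv (r S) (r S) <= rho ^+ 2.
    rewrite -enorm_sq; have := F3 S HS; have := enorm_ge0 (r S); nra.
  have hr2 : eta ^+ 2 * dotv (r S) (r S) <= eta ^+ 2 * rho ^+ 2.
    by rewrite ler_wpM2l // sqr_ge0.
  rewrite /C0; lra.
rewrite /PV ler_pdivrMr ?ltr0n //.
apply: le_trans; first exact: (ler_sum _ key).
rewrite sumrB.
have Z : \sum_(S : {set 'I_n} | #|S| == b) 2 * eta * dotv a (r S) = 0.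
  rewrite -mulr_sumr.
  under eq_bigr do rewrite dotvC.
  by rewrite -dotv_suml F4 dotv0l mulr0.
have CC : \sum_(S : {set 'I_n} | #|S| == b) C0 = C0 * N%:R.
  rewrite /N -sum1dep_card natr_sum mulr_sumr; apply: eq_bigr => S _.
  by rewrite mulr1.
rewrite Z subr0 CC ler_wpM2r ?ler0n //.
have haa : dotv a a <= s ^+ 2 - 2 * eta * mu * s ^+ 2 + eta ^+ 2 * K1 ^+ 2 * s ^+ 2.
  have e1 : eta * (mu * s ^+ 2) <= eta * dotv gb u by rewrite ler_wpM2l // ltW.
  have h2 : dotv gb gb <= K1 ^+ 2 * s ^+ 2.
    by rewrite -enorm_sq; have := enorm_ge0 gb; have := F6; nra.
  have e2 : eta ^+ 2 * dotv gb gb <= eta ^+ 2 * (K1 ^+ 2 * s ^+ 2).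
    by rewrite ler_wpM2l // sqr_ge0.
  rewrite /a dotv_expand (dotvC u gb) -(enorm_sq u) -/s; lra.
have k1 : 0 <= eta * (1 + s ^+ 2) * (mu - eta * (K1 ^+ 2 + 64 * D ^+ 2 * K2 ^+ 2)).
  apply: mulr_ge0; last by lra.
  by apply: mulr_ge0; [exact: ltW | rewrite addr_ge0 // sqr_ge0].
have k2 : 0 <= eta ^+ 2 * (D ^+ 2 * K2 ^+ 2) * (8 * (s - t) ^+ 2 + (4 * s - 1) ^+ 2 + (4 * t - 1) ^+ 2).
  apply: mulr_ge0; first by apply: mulr_ge0; [exact: sqr_ge0 | apply: mulr_ge0; exact: sqr_ge0].
  have := sqr_ge0 (s - t); have := sqr_ge0 (4 * s - 1); have := sqr_ge0 (4 * t - 1); lra.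
rewrite /Vhat -/u -/s /C0 /rho.
lra.
Qed.
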